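(* Suppose that $\Omega$ is a finite signature containing at least one symbol of arity $n\ge 2$, and let $X$ be a finite nonempty set. Then the Polish representation $\Phi_X:\overline{\Omega}_X\mathsf{Fin}_\Omega\to S_{\mathsf M}$ is not injective.
   Context: $\Omega=\biguplus_n\Omega_n$ has finitely many symbols in total (discrete topology), and $X$ is discrete. $\mathsf{Fin}_\Omega$ is the class of all finite (discrete) $\Omega$-algebras, and $\overline{\Omega}_X\mathsf{Fin}_\Omega$ is the free profinite $\Omega$-algebra on $X$ (the profinite $\Omega$-algebra with a map $X\to\overline{\Omega}_X\mathsf{Fin}_\Omega$ whose image generates a dense subalgebra, such that every map from $X$ into a finite $\Omega$-algebra extends uniquely to a continuous homomorphism). Let $\overline{\Omega}_{X\cup\Omega}\mathsf M$ be the free profinite monoid on the finite set $X\cup\Omega$ (disjoint union of $X$ and all $\Omega_k$). Make it an $\Omega$-algebra by $E_k(w,u_1,\dots,u_k)=wu_1\cdots u_k$ for $w\in\Omega_k$ (product in the monoid); $S_{\mathsf M}$ is the closed $\Omega$-subalgebra generated by $X$. The Polish representation $\Phi_X$ is the unique continuous $\Omega$-homomorphism $\overline{\Omega}_X\mathsf{Fin}_\Omega\to S_{\mathsf M}$ with $\Phi_X(x)=x$ for all $x\in X$. *)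

(* Defs.v *)
From HB Require Import structures.
From mathcomp Require Import all_boot all_order.
From mathcomp Require Import all_classical.
From mathcomp Require Import topology.
Set Implicit Arguments. Unset Strict Implicit. Unset Printing Implicit Defensive.
Local Open Scope classical_set_scope.

(* A finite signature Omega: a finite type [S] of symbols with arities [ar]. *)
Definition ops (S : finType) (ar : S -> nat) (A : Type) :=
  forall w : S, ('I_(ar w) -> A) -> A.

Definition is_hom (S : finType) (ar : S -> nat) (A B : Type)
  (opA : ops ar A) (opB : ops ar B) (f : A -> B) :=
  forall (w : S) (u : 'I_(ar w) -> A), f (opA w u) = opB w (f \o u).

Definition op_closed (S : finType) (ar : S -> nat) (A : Type)
  (opA : ops ar A) (P : set A) :=
  forall (w : S) (u : 'I_(ar w) -> A), (forall i, P (u i)) -> P (opA w u).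

Definition gen_subalg (S : finType) (ar : S -> nat) (A : Type)
  (opA : ops ar A) (G : set A) : set A :=
  \bigcap_(P in [set P | G `<=` P /\ op_closed opA P]) P.

Definition closed_gen_subalg (S : finType) (ar : S -> nat) (A : topologicalType)
  (opA : ops ar A) (G : set A) : set A :=
  \bigcap_(P in [set P | G `<=` P /\ op_closed opA P /\ closed P]) P.

Definition cont_to_discrete (A : topologicalType) (B : Type) (f : A -> B) :=
  forall b : B, open (f @^-1` [set b]).

Definition topological_algebra (S : finType) (ar : S -> nat)
  (A : topologicalType) (opA : ops ar A) :=
  forall w : S, continuous (opA w : {ptws 'I_(ar w) -> A} -> A).

Definition profinite_algebra (S : finType) (ar : S -> nat)
  (A : topologicalType) (opA : ops ar A) :=
  [/\ topological_algebra opA, compact [set: A], hausdorff_space A &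
      forall a b : A, a <> b ->
        exists (B : finType) (opB : ops ar B) (h : A -> B),
          [/\ is_hom opA opB h, cont_to_discrete h & h a <> h b]].

Definition free_profinite_algebra (S : finType) (ar : S -> nat) (X : Type)
  (F : topologicalType) (opF : ops ar F) (iota : X -> F) :=
  [/\ profinite_algebra opF,
      closure (gen_subalg opF (range iota)) = [set: F] &
      forall (B : finType) (opB : ops ar B) (f : X -> B),
        exists! h : F -> B,
          [/\ is_hom opF opB h, cont_to_discrete h & h \o iota = f]].

Definition monoid_axioms (M : Type) (mul : M -> M -> M) (one : M) :=
  [/\ forall a b c, mul a (mul b c) = mul (mul a b) c,
      forall a, mul one a = a & forall a, mul a one = a].

Definition is_monoid_hom (M N : Type) (mulM : M -> M -> M) (oneM : M)
  (mulN : N -> N -> N) (oneN : N) (f : M -> N) :=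
  f oneM = oneN /\ forall a b, f (mulM a b) = mulN (f a) (f b).

Definition profinite_monoid (M : topologicalType) (mul : M -> M -> M) (one : M) :=
  [/\ monoid_axioms mul one,
      continuous (fun p : M * M => mul p.1 p.2),
      compact [set: M], hausdorff_space M &
      forall a b : M, a <> b ->
        exists (B : finType) (mulB : B -> B -> B) (oneB : B) (h : M -> B),
          [/\ monoid_axioms mulB oneB, is_monoid_hom mul one mulB oneB h,
              cont_to_discrete h & h a <> h b]].

Definition gen_submonoid (M : Type) (mul : M -> M -> M) (one : M)
  (G : set M) : set M :=
  \bigcap_(P in [set P | G `<=` P /\ P one /\
                 forall a b, P a -> P b -> P (mul a b)]) P.

Definition free_profinite_monoid (Y : Type) (M : topologicalType)
  (mul : M -> M -> M) (one : M) (iota : Y -> M) :=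
  [/\ profinite_monoid mul one,
      closure (gen_submonoid mul one (range iota)) = [set: M] &
      forall (B : finType) (mulB : B -> B -> B) (oneB : B) (f : Y -> B),
        monoid_axioms mulB oneB ->
        exists! h : M -> B,
          [/\ is_monoid_hom mul one mulB oneB h, cont_to_discrete h &
              h \o iota = f]].

Definition polish_ops (S : finType) (ar : S -> nat) (X : Type) (M : Type)
  (mul : M -> M -> M) (iota : X + S -> M) : ops ar M :=
  fun w u => foldl mul (iota (inr w)) [seq u i | i <- enum 'I_(ar w)].

(* Main.v *)
Require Import Defs.
From HB Require Import structures.
From mathcomp Require Import all_boot all_order.
From mathcomp Require Import all_classical.
From mathcomp Require Import topology.
From mathcomp Require Import zify.
Local Open Scope classical_set_scope.
Set Implicit Arguments. Unset Strict Implicit.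

Section Mon.
Variables (B : Type) (mulB : B -> B -> B) (oneB : B).
Hypothesis HB : monoid_axioms mulB oneB.
Local Notation "a * b" := (mulB a b).

Definition pw z n := iter n (mulB z) oneB.
Arguments pw : simpl never.
Lemma pwS z n : pw z n.+1 = z * pw z n. Proof. by []. Qed.

Lemma mA a b c : a * (b * c) = (a * b) * c. Proof. by case: HB. Qed.
Lemma m1 a : oneB * a = a. Proof. by case: HB. Qed.
Lemma m1r a : a * oneB = a. Proof. by case: HB. Qed.

Lemma pwD z m n : pw z (m + n) = pw z m * pw z n.
Proof. elim: m => [|m IH]; first by rewrite m1. by rewrite addSn !pwS IH mA. Qed.

Lemma pw_comm z m : pw z m * z = z * pw z m.
Proof.
have e1 : pw z 1 = z by rewrite /pw /= m1r.
transitivity (pw z m * pw z 1); first by rewrite e1.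
by rewrite -pwD addnC pwD e1.
Qed.

Lemma foldl_nseq y z n : foldl mulB y (nseq n z) = y * pw z n.
Proof. elim: n y => [|n IH] y /=; first by rewrite m1r. by rewrite IH pwS mA. Qed.

End Mon.

Section Fin.
Variables (B : finType) (mulB : B -> B -> B) (oneB : B).
Hypothesis HB : monoid_axioms mulB oneB.
Local Notation "a * b" := (mulB a b).
Local Notation pw := (pw mulB oneB).

Lemma pw_period z : exists i p, [/\ 0 < p, i <= #|B|, p <= #|B| &
   forall l d, i <= l -> p %| d -> pw z (l + d) = pw z l].
Proof.
have key : forall i j, i < j <= #|B| -> pw z i = pw z j -> exists i p, [/\ 0 < p, i <= #|B|, p <= #|B| &
   forall l d, i <= l -> p %| d -> pw z (l + d) = pw z l].
  move=> i j /andP[ij jB] e; exists i, (j - i); split; [by rewrite subn_gt0|lia|lia|].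
  have step : forall l, i <= l -> pw z (l + (j - i)) = pw z l.
    move=> l il.
    by rewrite -(subnK il) -addnA (addnC i) (subnK (ltnW ij)) !(pwD HB) e.
  move=> l d il /dvdnP [r ->]; elim: r => [|r IH]; first by rewrite mul0n addn0.
  rewrite mulSn (addnC (j - i)) addnA step //; lia.
have [inj|ninj] := pselect (injective (fun j : 'I_#|B|.+1 => pw z j)).
  by have := @leq_card _ _ _ inj; rewrite card_ord ltnn.
have [i [j [e ne]]] : exists i j : 'I_#|B|.+1, pw z i = pw z j /\ i <> j.
  apply: contrapT => H; apply: ninj => i j e; apply: contrapT => ne; apply: H; by exists i, j.
have iB := ltn_ord i; have jB := ltn_ord j.
case: (ltngtP i j) => ij.
- by apply: (key i j) => //; rewrite ij /=.
- by apply: (key j i) => //; rewrite ij /=.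
- by case: ne; apply: val_inj.
Qed.

Lemma pw_fact z : exists e, forall N, #|B| <= N -> pw z N`! = e /\ e * e = e.
Proof.
have [i [p [p0 iB pB per]]] := pw_period z.
exists (pw z (#|B|)`!) => N NB.
have pN : p %| N`! by apply: dvdn_fact; rewrite p0 /=; lia.
have pB' : p %| (#|B|)`! by apply: dvdn_fact; rewrite p0.
have iN : i <= N`!. apply: leq_trans (fact_geq N). lia.
have iB' : i <= (#|B|)`! by apply: leq_trans (fact_geq _).
split; last by rewrite -(pwD HB) per.
by rewrite -(per N`! (#|B|)`!) // addnC per.
Qed.
End Fin.

Lemma cluster_seq (T : topologicalType) (s : nat -> T) : compact [set: T] ->
  exists a, forall (B : Type) (H : T -> B), cont_to_discrete H ->
    forall N, exists n, (N <= n)%N /\ H (s n) = H a.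
Proof.
move=> cT.
have [a [_ cla]] := cT (fmap s \oo) _ filterT.
exists a => B H cH N.
have := cla (s @` [set n | (N <= n)%N]) (H @^-1` [set H a]).
case.
- exists N => // n /= Nn; by exists n.
- apply: open_nbhs_nbhs; split; [exact: cH|done].
move=> y [[n Nn <-]] /= e; by exists n.
Qed.

Lemma map_enum_val T n (u : nat -> T) : [seq u (val i) | i <- enum 'I_n] = map u (iota 0 n).
Proof. by rewrite -val_enum_ord -map_comp. Qed.

Lemma map_iota_const T (b : T) (u : nat -> T) m n :
  (forall j, m <= j < m + n -> u j = b) -> map u (iota m n) = nseq n b.
Proof.
elim: n m => [|n IH] m hu //=.
rewrite hu ?IH //; last by lia.
move=> j mj; apply: hu; lia.
Qed.

Lemma list_g T n (u : nat -> T) b : 1 <= n -> (forall j, 0 < j -> u j = b) ->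
  map u (iota 0 n) = u 0 :: nseq n.-1 b.
Proof. case: n => // n _ hu /=; rewrite (map_iota_const (b:=b)) // => j /andP[j1 _]; exact: hu. Qed.

Lemma list_q T n (u : nat -> T) b : 2 <= n -> (forall j, 0 < j < n.-1 -> u j = b) ->
  map u (iota 0 n) = u 0 :: rcons (nseq n.-2 b) (u n.-1).
Proof.
case: n => [|[|n]] // _ hu.
have -> : iota 0 n.+2 = 0 :: (iota 1 n ++ [:: n.+1]).
  have e : n.+2 = 1 + n + 1 by rewrite addn1.
  by rewrite e !iotaD.
rewrite /= map_cat -cats1 /= (map_iota_const (b:=b)) // => j jn; apply: hu; lia.
Qed.


Lemma foldl_hom (A B : Type) (mA : A -> A -> A) (mB : B -> B -> B) (h : A -> B) :
  (forall a b, h (mA a b) = mB (h a) (h b)) ->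
  forall l a, h (foldl mA a l) = foldl mB (h a) (map h l).
Proof. by move=> hh; elim=> [|c l IH] a //=; rewrite IH hh. Qed.

Unset Implicit Arguments.
Theorem proposition4p14
  (S : finType) (ar : S -> nat) (X : finType)
  (Hn : exists w : S, 2 <= ar w) (HX : 0 < #|X|)
  (F : topologicalType) (opF : ops ar F) (iotaF : X -> F)
  (HF : free_profinite_algebra opF iotaF)
  (M : topologicalType) (mul : M -> M -> M) (one : M) (iotaM : X + S -> M)
  (HM : free_profinite_monoid mul one iotaM)
  (Phi : F -> M)
  (Phi_cont : continuous Phi)
  (Phi_hom : is_hom opF (polish_ops (ar:=ar) mul iotaM) Phi)
  (Phi_gen : forall x : X, Phi (iotaF x) = iotaM (inl x))
  (Phi_SM : Phi @` [set: F] `<=`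
            closed_gen_subalg (polish_ops (ar:=ar) mul iotaM) (iotaM @` (range inl))) :
  ~ injective Phi.
Proof.
move=> inj.
case: Hn => f Hf; case/card_gt0P: HX => x _.
pose X0 := iotaF x.
pose g t := opF f (fun i => if val i == 0 then t else X0).
pose q s t := opF f (fun i => if val i == 0 then s else if val i == (ar f).-1 then t else X0).
pose T2 m := q (iter m g X0) (iter m g X0).
pose T1 m := iter m g (T2 m).
have nz : ((ar f).-1 == 0) = false by apply/negbTE; rewrite -lt0n; lia.
have ltf : (ar f).-1 < ar f by lia.
case: HF => [[_ cF _ _] _ univF].
have [a Ha] := cluster_seq (fun N => T1 N`!) cF.
have [b Hb] := cluster_seq (fun N => T2 N`!) cF.
have ab : Phi a = Phi b.
  apply: contrapT => ne.
  case: HM => [[_ _ _ _ sepM] _ _].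
  have [B [mulB [oneB [h [monB [_ homh] ch neh]]]]] := sepM _ _ ne.
  pose H := h \o Phi.
  have cH : cont_to_discrete H.
    move=> c; exact: (proj1 (continuousP _) Phi_cont _ (ch c)).
  have H_op w u : H (opF w u) = foldl mulB (h (iotaM (inr w))) [seq H (u i) | i <- enum 'I_(ar w)].
    by rewrite /H /= Phi_hom /polish_ops (foldl_hom homh) -map_comp.
  pose P := h (iotaM (inr f)); pose Hx := H X0.
  pose C := pw mulB oneB Hx (ar f).-1; pose D := pw mulB oneB Hx (ar f).-2.
  have Hg t : H (g t) = mulB (mulB P (H t)) C.
    rewrite /g H_op (map_enum_val _ (fun j => H (if j == 0 then t else X0))).
    rewrite (list_g (b := Hx)); first by rewrite /= (foldl_nseq monB).
      lia.
    by case.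
  have Hq s t : H (q s t) = mulB (mulB (mulB P (H s)) D) (H t).
    rewrite /q H_op (map_enum_val _ (fun j => H (if j == 0 then s else if j == (ar f).-1 then t else X0))).
    rewrite (list_q (b := Hx)) //; last by move=> [|j] //= jl; rewrite (ltn_eqF jl).
    by rewrite /= foldl_rcons (foldl_nseq monB) nz eqxx.
  have Hit m t : H (iter m g t) = mulB (mulB (pw mulB oneB P m) (H t)) (pw mulB oneB C m).
    elim: m => [|m IH]; first by rewrite /pw /= (m1 monB) (m1r monB).
    by rewrite iterS Hg IH !pwS -(pw_comm monB C) !(mA monB).
  have [eP HP] := pw_fact monB P.
  have [eC HC] := pw_fact monB C.
  pose V := mulB (mulB (mulB P (mulB (mulB eP Hx) eC)) D) (mulB (mulB eP Hx) eC).
  have HT2 N : #|B| <= N -> H (T2 N`!) = V.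
    move=> NB; have [e1 _] := HP N NB; have [e2 _] := HC N NB.
    by rewrite /T2 Hq Hit e1 e2.
  have HT1 N : #|B| <= N -> H (T1 N`!) = V.
    move=> NB; have [e1 i1] := HP N NB; have [e2 i2] := HC N NB.
    have cP : mulB eP P = mulB P eP by rewrite -e1 (pw_comm monB).
    rewrite /T1 Hit HT2 // e1 e2 /V -!(mA monB) i2.
    by rewrite (mA monB eP P) cP -(mA monB P eP) (mA monB eP eP) i1.
  have [n [nB e]] := Ha _ H cH #|B|.
  have [n' [nB' e']] := Hb _ H cH #|B|.
  apply: neh; change (H a = H b).
  by rewrite -e -e' HT1 // HT2.
have [k [[homk ck kx] _]] := univF bool
  (fun w v => [exists i : 'I_(ar w), (val i == (ar w).-1) && ~~ v i]) (fun _ => false).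
have kX0 : k X0 = false by exact: (congr1 (fun F => F x) kx).
have kg t : k (g t) = true.
  rewrite /g homk; apply/existsP; exists (Ordinal ltf); by rewrite /= eqxx nz kX0.
have kq s t : k (q s t) = ~~ k t.
  rewrite /q homk; apply/idP/idP.
    by case/existsP => i /andP[/eqP ei]; rewrite /= ei nz eqxx.
  by move=> kt; apply/existsP; exists (Ordinal ltf); by rewrite /= eqxx nz.
have kit m t : 0 < m -> k (iter m g t) = true by case: m => // m _; rewrite iterS kg.
have [n [_ e]] := Ha _ k ck 0.
have [n' [_ e']] := Hb _ k ck 0.
have : k a = k b by rewrite (inj _ _ ab).
rewrite -e -e' /T1 kit ?fact_gt0 // /T2 kq kit ?fact_gt0 //.
Qed.
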